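(* Let $B',B''\subseteq\widetilde\Sigma^*\setminus\mathring\Sigma^+$ be bases in decomposed form, $B'$ with scaffold $sc'$ and fill $fl'$, $B''$ with scaffold $sc''$ and fill $fl''$. If $B'$ and $B''$ are joinable, then $\mathcal{C}(B')\cup\mathcal{C}(B'')=\mathcal{C}(B'\cup B'')$.
   Context: $\Sigma$ is a finite alphabet, $\mathring\Sigma=\{\mathring a\mid a\in\Sigma\}$ a disjoint (''dotted'') copy, and $\widetilde\Sigma=\Sigma\cup\mathring\Sigma$. The match operation $@$ on letters is: $a@\mathring a=\mathring a@a=a$, $\mathring a@\mathring a=\mathring a$ for $a\in\Sigma$, undefined otherwise. For words $w,w'\in\widetilde\Sigma^n$, $w@w'=(w(1)@w'(1))\cdots(w(n)@w'(n))$ if every letterwise match is defined ($\epsilon@\epsilon=\epsilon$); otherwise (including unequal lengths) undefined. For languages, $B_1@B_2=\{w_1@w_2\mid w_1\in B_1,w_2\in B_2, w_1@w_2\text{ defined}\}$. Define $B^{0@}=B$, $B^{i@}=B^{(i-1)@}@B$, $B^@=\bigcup_{i\ge0}B^{i@}$, and $\mathcal{C}(B)=B^@\cap\Sigma^*$. $B$ is unproductive if $\mathcal{C}(B)=\emptyset$; $(B_1,B_2)$ is unmatchable if $B_1@B_2=\emptyset$. A base $B\subseteq\widetilde\Sigma^*\setminus\mathring\Sigma^+$ is in decomposed form with scaffold $sc$ and fill $fl$ if $B$ is the disjoint union of $sc$ and $fl$, $fl$ is unproductive and $(sc,sc)$ is unmatchable. Two decomposed bases $B',B''$ (scaffolds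 $sc',sc''$, fills $fl',fl''$) are joinable if $B'\cup B''$ is in decomposed form with scaffold $sc'\cup sc''$ and fill $fl'\cup fl''$, and the pairs $(sc',fl'')$ and $(sc'',fl')$ are unmatchable. *)

(* Defs.v *)
From mathcomp Require Import all_boot.
Set Implicit Arguments. Unset Strict Implicit. Unset Printing Implicit Defensive.

Section Matching.
Variable Sigma : finType.

(* Letters of widetilde Sigma = Sigma  U  dotted copy of Sigma. *)
Inductive tletter : Type := Plain of Sigma | Dot of Sigma.

Definition is_plain (x : tletter) : bool := if x is Plain _ then true else false.
Definition is_dot (x : tletter) : bool := if x is Dot _ then true else false.

Definition word := seq tletter.
Definition lang := word -> Prop.

Definition match_letter (x y : tletter) : option tletter :=
  match x, y with
  | Plain a, Dot b => if a == b then Some (Plain a) else None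
  | Dot a, Plain b => if a == b then Some (Plain a) else None
  | Dot a, Dot b => if a == b then Some (Dot a) else None
  | Plain _, Plain _ => None
  end.

Fixpoint match_word (w w' : word) : option word :=
  match w, w' with
  | [::], [::] => Some [::]
  | x :: u, y :: u' =>
      match match_letter x y, match_word u u' with
      | Some z, Some r => Some (z :: r)
      | _, _ => None
      end
  | _, _ => None
  end.

Definition lang_match (B1 B2 : lang) : lang :=
  fun w => exists w1 w2, B1 w1 /\ B2 w2 /\ match_word w1 w2 = Some w.

Definition lang_union (B1 B2 : lang) : lang := fun w => B1 w \/ B2 w.

Fixpoint match_pow (B : lang) (i : nat) : lang :=
  match i with
  | 0 => B
  | i'.+1 => lang_match (match_pow B i') B
  end.

Definition match_star (B : lang) : lang := fun w => exists i, match_pow B i w.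

Definition cclosure (B : lang) : lang := fun w => match_star B w /\ all is_plain w.

Definition unproductive (B : lang) : Prop := forall w, ~ cclosure B w.
Definition unmatchable (B1 B2 : lang) : Prop := forall w, ~ lang_match B1 B2 w.

Definition is_base (B : lang) : Prop :=
  forall w, B w -> ~ (w <> [::] /\ all is_dot w).

Definition decomposed (B sc fl : lang) : Prop :=
  [/\ is_base B,
      (forall w, B w <-> sc w \/ fl w),
      (forall w, ~ (sc w /\ fl w)),
      unproductive fl
    & unmatchable sc sc].

Definition joinable (B' sc' fl' B'' sc'' fl'' : lang) : Prop :=
  [/\ decomposed (lang_union B' B'') (lang_union sc' sc'') (lang_union fl' fl''),
      unmatchable sc' fl''
    & unmatchable sc'' fl'].

End Matching.

(* Main.v *)
Require Import Defs.
From mathcomp Require Import all_boot.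

Section S.
Variable Sigma : finType.

Lemma ml_sym (x y : tletter Sigma) : match_letter x y = match_letter y x.
Proof.
case: x => a; case: y => b /=; rewrite ?(eq_sym a b) //;
case: eqP => // ->; done.
Qed.

Lemma mw_sym (x y : word Sigma) : match_word x y = match_word y x.
Proof.
elim: x y => [|a x IH] [|b y] //=. by rewrite ml_sym IH.
Qed.

Lemma ml_L1 (x y z u : tletter Sigma) : match_letter x y = Some z ->
  match_letter z u <> None -> match_letter x u <> None /\ match_letter y u <> None.
Proof.
case: x => a; case: y => b; case: u => c /=; try by [];
case: eqP => //= ? [<-] /=; subst; case: eqP => //= ? _; subst; rewrite ?eqxx //.
Qed.

Lemma mw_L1 (r b r' c : word Sigma) : match_word r b = Some r' ->
  match_word r' c <> None -> match_word r c <> None /\ match_word b c <> None.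
Proof.
elim: r b r' c => [|x r IH] [|y b] r' [|u c] //=.
- by move=> [] <-.
- by case: (match_letter x y); case: (match_word r b) => //= ? ? [] <-.
- case E1: (match_letter x y) => [z|] //; case E2: (match_word r b) => [s|] // [] <- /=.
  case E3: (match_letter z u) => [t|] //; case E4: (match_word s c) => [v|] // _.
  have [H1 H2] := @ml_L1 _ _ _ u E1 (ltac:(by rewrite E3)).
  have [H3 H4] := IH _ _ c E2 (ltac:(by rewrite E4)).
  split.
  + by case: (match_letter x u) H1 => // ? _; case: (match_word r c) H3.
  + by case: (match_letter y u) H2 => // ? _; case: (match_word b c) H4.
Qed.

Lemma mp_mono (B C : lang Sigma) : (forall w, B w -> C w) ->
  forall i w, match_pow B i w -> match_pow C i w.
Proof.
move=> H; elim=> [|i IH] w /=; first exact: H.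
by move=> [w1 [w2 [h1 [h2 h3]]]]; exists w1, w2; split; [apply: IH| split; [apply: H|]].
Qed.

Lemma bad (P Q : lang Sigma) x y : unmatchable P Q -> P x -> Q y ->
  match_word x y <> None -> False.
Proof.
move=> H px qy; case E: (match_word x y) => [t|] // _.
by apply: (H t); exists x, y.
Qed.

Lemma some_nn (x y t : word Sigma) : match_word x y = Some t -> match_word x y <> None.
Proof. by move=> ->. Qed.

End S.
Arguments bad {Sigma P Q x y}.
Arguments some_nn {Sigma x y t}.


Theorem theorem1 (Sigma : finType) (B' sc' fl' B'' sc'' fl'' : lang Sigma) :
  decomposed B' sc' fl' ->
  decomposed B'' sc'' fl'' ->
  joinable B' sc' fl' B'' sc'' fl'' ->
  forall w : word Sigma,
    lang_union (cclosure B') (cclosure B'') w <-> cclosure (lang_union B' B'') w.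
Proof.
move=> [_ D1 _ _ _] [_ D2 _ _ _] [[_ DU _ UF USC] X1 X2] w.
split.
- case=> [[[i H] P]|[[i H] P]]; split=> //; exists i; apply: mp_mono H => v;
  by [left|right].
move=> [[i H] P].
set U := lang_union B' B''.
set F := lang_union fl' fl''.
have key : forall i r, match_pow U i r ->
 [\/ match_pow F i r /\ (forall c, sc' c -> match_word r c <> None -> match_pow B' i r)
         /\ (forall c, sc'' c -> match_word r c <> None -> match_pow B'' i r),
   match_pow B' i r /\ exists s, sc' s /\ forall c, match_word r c <> None -> match_word s c <> None
 | match_pow B'' i r /\ exists s, sc'' s /\ forall c, match_word r c <> None -> match_word s c <> None].
  elim=> [|j IH] r /=.
  - move=> hr; case/(DU r).1: hr => [[hs|hs]|[hf|hf]].
    + by constructor 2; split; [apply/D1; left| exists r].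
    + by constructor 3; split; [apply/D2; left| exists r].
    + constructor 1; split; first by left.
      split=> c hc hrc; first by apply/D1; right.
      exfalso; apply: (bad X2 hc hf); by rewrite mw_sym.
    + constructor 1; split; first by right.
      split=> c hc hrc; last by apply/D2; right.
      exfalso; apply: (bad X1 hc hf); by rewrite mw_sym.
  move=> [r0 [b [hr [hb E]]]].
  have crb := some_nn E.
  have L := fun c => @mw_L1 _ _ _ _ c E.
  case: (IH r0 hr) => [[hF [hc1 hc2]]|[hB [s [hs hsc]]]|[hB [s [hs hsc]]]];
  case/(DU b).1: hb => [[hbs|hbs]|[hbf|hbf]].
  + constructor 2; split; first by exists r0, b; split; [apply: hc1 hbs crb|split; [apply/D1; left|]].
    by exists b; split => // c /L [].
  + constructor 3; split; first by exists r0, b; split; [apply: hc2 hbs crb|split; [apply/D2; left|]].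
    by exists b; split => // c /L [].
  + constructor 1; split; first by exists r0, b; split => //; split => //; left.
    split=> c hc /L [h1 h2].
      by exists r0, b; split; [apply: hc1 hc h1|split; [apply/D1; right|]].
    exfalso; apply: (bad X2 hc hbf); by rewrite mw_sym.
  + constructor 1; split; first by exists r0, b; split => //; split => //; right.
    split=> c hc /L [h1 h2].
      exfalso; apply: (bad X1 hc hbf); by rewrite mw_sym.
    by exists r0, b; split; [apply: hc2 hc h1|split; [apply/D2; right|]].
  + by exfalso; apply: (bad USC (or_introl hs) (or_introl hbs) (hsc _ crb)).
  + by exfalso; apply: (bad USC (or_introl hs) (or_intror hbs) (hsc _ crb)).
  + constructor 2; split; first by exists r0, b; split => //; split => //; apply/D1; right.
    by exists s; split => // c /L [] /hsc.
  + by exfalso; apply: (bad X1 hs hbf (hsc _ crb)).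
  + by exfalso; apply: (bad USC (or_intror hs) (or_introl hbs) (hsc _ crb)).
  + by exfalso; apply: (bad USC (or_intror hs) (or_intror hbs) (hsc _ crb)).
  + by exfalso; apply: (bad X2 hs hbf (hsc _ crb)).
  + constructor 3; split; first by exists r0, b; split => //; split => //; apply/D2; right.
    by exists s; split => // c /L [] /hsc.
case: (key i w H) => [[hF _]|[hB _]|[hB _]].
- by exfalso; apply: (UF w); split => //; exists i.
- by left; split => //; exists i.
- by right; split => //; exists i.
Qed.
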